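(* The subgroup of $G_2=\mathrm{GL}_2(\mathbb{F}_q)$ generated by $P_2^\ell$ and $\overline{P}_2^\ell$ is $G_2^\ell$.
   Context: $p$ is a prime, $q$ a power of $p$, $\ell\ne p$ a prime. $\mathbb{F}_q^{\times,\ell}$ is the subgroup of elements of $\mathbb{F}_q^\times$ of order prime to $\ell$, $G_2^\ell=\det^{-1}(\mathbb{F}_q^{\times,\ell})\subset G_2$. $P_2=\{\begin{psmallmatrix}a&b\\0&1\end{psmallmatrix}\}$ is the mirabolic subgroup, $\overline{P}_2=\{\begin{psmallmatrix}a&0\\c&1\end{psmallmatrix}\}$ the opposite mirabolic subgroup, $P_2^\ell=P_2\cap G_2^\ell$ and $\overline{P}_2^\ell=\overline{P}_2\cap G_2^\ell$. *)

(* Defs.v *)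
From HB Require Import structures.
From mathcomp Require Import all_boot all_order all_algebra all_fingroup.
Set Implicit Arguments. Unset Strict Implicit. Unset Printing Implicit Defensive.
Import GRing.Theory.
Local Open Scope ring_scope.

Lemma GL_det_unit (F : finFieldType) (g : {'GL_2[F]}) :
  \det (GLval g) \is a GRing.unit.
Proof. by rewrite -unitmxE; exact: GL_unit. Qed.

Definition detu (F : finFieldType) (g : {'GL_2[F]}) : {unit F} :=
  FinRing.Unit (GL_det_unit g).

Definition Fxl (F : finFieldType) (l : nat) : {set {unit F}} :=
  [set u : {unit F} | coprime #[u]%g l].

Definition G2l (F : finFieldType) (l : nat) : {set {'GL_2[F]}} :=
  [set g : {'GL_2[F]} | detu g \in Fxl F l].

Definition P2 (F : finFieldType) : {set {'GL_2[F]}} :=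
  [set g : {'GL_2[F]} | (GLval g ord_max ord0 == 0) && (GLval g ord_max ord_max == 1)].

Definition P2bar (F : finFieldType) : {set {'GL_2[F]}} :=
  [set g : {'GL_2[F]} | (GLval g ord0 ord_max == 0) && (GLval g ord_max ord_max == 1)].

Definition P2l (F : finFieldType) (l : nat) := P2 F :&: G2l F l.
Definition P2barl (F : finFieldType) (l : nat) := P2bar F :&: G2l F l.

(* Main.v *)
Require Import Defs.
From HB Require Import structures.
From mathcomp Require Import all_boot all_order all_algebra all_fingroup.
From mathcomp Require Import cyclic ring.
Set Implicit Arguments. Unset Strict Implicit. Unset Printing Implicit Defensive.
Import GRing.Theory.
Local Open Scope ring_scope.

Definition mx2 (F : finFieldType) (a b c d : F) : 'M[F]_2 :=
  \matrix_(i < 2, j < 2) if (i : nat) == 0%N then (if (j : nat) == 0%N then a else b)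
                         else (if (j : nat) == 0%N then c else d).

Lemma mx2_eq (F : finFieldType) (M : 'M[F]_2) :
  M = mx2 (M ord0 ord0) (M ord0 ord_max) (M ord_max ord0) (M ord_max ord_max).
Proof.
apply/matrixP => i j; rewrite mxE.
by case: i j => [[|[|?]] ?] [[|[|?]] ?] //; congr (M _ _); apply: val_inj.
Qed.

Lemma mx2_mul (F : finFieldType) (a b c d a' b' c' d' : F) :
  mx2 a b c d *m mx2 a' b' c' d' =
  mx2 (a * a' + b * c') (a * b' + b * d') (c * a' + d * c') (c * b' + d * d').
Proof.
apply/matrixP => i j; rewrite !mxE !big_ord_recr big_ord0 /= add0r !mxE /=.
by case: i j => [[|[|?]] ?] [[|[|?]] ?].
Qed.

Lemma mx2_det (F : finFieldType) (a b c d : F) : \det (mx2 a b c d) = a * d - b * c.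
Proof.
rewrite (expand_det_row _ ord0) !big_ord_recr big_ord0 /= add0r /cofactor !det_mx11 !mxE /=.
rewrite !expr0 !mul1r.
by rewrite add0n expr1 mulN1r mulrN.
Qed.

Definition gl (F : finFieldType) (a b c d : F) : {'GL_2[F]} :=
  insubd (1%g : {'GL_2[F]}) (mx2 a b c d).

Lemma glE (F : finFieldType) (a b c d : F) :
  a * d - b * c != 0 -> GLval (gl a b c d) = mx2 a b c d.
Proof.
move=> H; rewrite /gl insubdK //.
by rewrite -[_ \is a GRing.unit]/(_ \in unitmx) unitmxE mx2_det unitfE.
Qed.

Lemma detuM (F : finFieldType) (g h : {'GL_2[F]}) : detu (g * h)%g = (detu g * detu h)%g.
Proof. by apply: val_inj; rewrite /= -det_mulmx. Qed.

Lemma detu1 (F : finFieldType) : detu (1%g : {'GL_2[F]}) = 1%g.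
Proof. by apply: val_inj; exact: det1. Qed.

Lemma G2l_group_set (F : finFieldType) (l : nat) : group_set (G2l F l).
Proof.
apply/group_setP; split.
  by rewrite inE detu1 inE order1 coprime1n.
move=> x y; rewrite !inE detuM => cx cy.
set u := detu x in cx *; set v := detu y in cy *.
have cuv : commute u v by apply: val_inj; rewrite !FinRing.val_unitM mulrC.
have : (#[u * v]%g %| #[u]%g * #[v]%g)%N.
  rewrite order_dvdn; apply/eqP; rewrite expgMn // expgM mulnC expgM !expg_order !expg1n.
  by rewrite mulg1.
move/coprime_dvdl; apply; by rewrite coprimeMl cx cy.
Qed.

Canonical G2l_group (F : finFieldType) (l : nat) := Group (G2l_group_set F l).

Lemma detu_gl (F : finFieldType) (a b c d : F) :
  a * d - b * c != 0 -> val (detu (gl a b c d)) = a * d - b * c.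
Proof. by move=> H; rewrite /= glE // mx2_det. Qed.

Lemma gl_P2l (F : finFieldType) l (x : F) : gl 1 x 0 1 \in P2l F l.
Proof.
have H : 1 * 1 - x * 0 != 0 :> F by rewrite mulr0 subr0 mul1r oner_neq0.
rewrite !inE glE // !mxE /= !eqxx /=.
have -> : detu (gl 1 x 0 1) = 1%g by apply: val_inj; rewrite detu_gl // mulr0 subr0 mul1r.
by rewrite order1 coprime1n.
Qed.

Lemma gl_P2barl (F : finFieldType) l (x : F) : gl 1 0 x 1 \in P2barl F l.
Proof.
have H : 1 * 1 - 0 * x != 0 :> F by rewrite mul0r subr0 mul1r oner_neq0.
rewrite !inE glE // !mxE /= !eqxx /=.
have -> : detu (gl 1 0 x 1) = 1%g by apply: val_inj; rewrite detu_gl // mul0r subr0 mul1r.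
by rewrite order1 coprime1n.
Qed.

Lemma caseA (F : finFieldType) l (g : {'GL_2[F]}) : g \in G2l F l ->
  GLval g ord_max ord0 != 0 -> g \in <<P2l F l :|: P2barl F l>>%g.
Proof.
move=> gG c0.
set M := GLval g in c0.
set a := M ord0 ord0; set b := M ord0 ord_max; set c := M ord_max ord0; set d := M ord_max ord_max.
have eM : M = mx2 a b c d := mx2_eq M.
have dM : \det M = a * d - b * c by rewrite eM mx2_det.
have e0 : a * d - b * c != 0 by rewrite -dM; exact: GL_det.
set e := a * d - b * c in dM e0.
set x := (a - e) / c; set y := (d - 1) / c.
have H1 : forall z : F, 1 * 1 - z * 0 != 0 by move=> z; rewrite mulr0 subr0 mul1r oner_neq0.
have H2 : e * 1 - 0 * c != 0 by rewrite mulr1 mul0r subr0.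
have -> : g = (gl 1%R x 0%R 1%R * gl e 0%R c 1%R * gl 1%R y 0%R 1%R)%g.
  apply: val_inj; change (GLval g = GLval (gl 1%R x 0%R 1%R * gl e 0%R c 1%R * gl 1%R y 0%R 1%R)%g).
  rewrite !GL_MxE !glE // !mx2_mul.
  rewrite -/M {1}eM /x /y /e; congr mx2; field.
  all: try exact: c0.
  by [].
rewrite groupM ?groupM ?mem_gen //; apply/setUP; try (by left; exact: gl_P2l).
right; rewrite !inE glE // !mxE /= !eqxx /=.
have -> : detu (gl e 0 c 1) = detu g.
  by apply: val_inj; rewrite detu_gl // mulr1 mul0r subr0 /= -/M dM.
by move: gG; rewrite !inE.
Qed.

Theorem lemmaB1 (F : finFieldType) (p l : nat) :
  prime p -> p \in [pchar F]%R -> prime l -> l != p ->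
  <<P2l F l :|: P2barl F l>>%g = G2l F l.
Proof.
move=> _ _ _ _.
apply/eqP; rewrite eqEsubset; apply/andP; split.
  by rewrite gen_subG subUset !subsetIr.
apply/subsetP => g gG.
case: (eqVneq (GLval g ord_max ord0) 0) => c0; last exact: caseA.
have dL : forall z : F, 1 * 1 - 0 * z != 0 by move=> z; rewrite mul0r subr0 mul1r oner_neq0.
have LL : (@gl F 1%R 0%R (-1)%R 1%R * @gl F 1%R 0%R 1%R 1%R)%g = 1%g.
  apply: val_inj; change (GLval (@gl F 1%R 0%R (-1)%R 1%R * @gl F 1%R 0%R 1%R 1%R)%g = GLval 1%g).
  rewrite GL_MxE GL_1E !glE // mx2_mul; apply/matrixP => i j; rewrite !mxE /=.
  by case: i j => [[|[|?]] ?] [[|[|?]] ?] //=; ring.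
have -> : g = (@gl F 1%R 0%R (-1)%R 1%R * (@gl F 1%R 0%R 1%R 1%R * g))%g.
  by rewrite mulgA LL mul1g.
have LG : @gl F 1%R 0%R 1%R 1%R \in G2l F l.
  by move: (gl_P2barl l (1 : F)); rewrite inE => /andP[].
rewrite groupM //.
  by rewrite mem_gen //; apply/setUP; right; exact: gl_P2barl.
apply: caseA; first by rewrite groupM.
rewrite GL_MxE glE // (mx2_eq (GLval g)) mx2_mul !mxE /= c0 mul1r mulr0 addr0.
have := GL_det g; rewrite [X in \det X](mx2_eq (GLval g)) mx2_det c0 mulr0 subr0.
by apply: contra => /eqP ->; rewrite mul0r.
Qed.
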